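(* Let $G$ be a group and assume that some finite index subgroup of $G$ embeds in $\mathrm{IET}$. Then $G$ embeds in $\mathrm{IET}$.
   Context: $\mathrm{IET}$ denotes the group of interval exchange transformations of $[0,1)$: bijections of $[0,1)$ that are orientation-preserving piecewise isometries (piecewise translations), left-continuous, with finitely many discontinuity points. *)

(* Defs.v *)
From Stdlib Require Import Reals List.
Open Scope R_scope.

Definition is_group {G : Type} (mul : G -> G -> G) (one : G) (inv : G -> G) : Prop :=
  (forall x y z, mul x (mul y z) = mul (mul x y) z) /\
  (forall x, mul one x = x) /\ (forall x, mul x one = x) /\
  (forall x, mul (inv x) x = one) /\ (forall x, mul x (inv x) = one).

Definition is_subgroup {G : Type} (mul : G -> G -> G) (one : G) (inv : G -> G)
  (H : G -> Prop) : Prop :=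
  H one /\ (forall x y, H x -> H y -> H (mul x y)) /\ (forall x, H x -> H (inv x)).

Definition finite_index {G : Type} (mul : G -> G -> G) (inv : G -> G)
  (H : G -> Prop) : Prop :=
  exists reps : list G, forall x : G, exists g, In g reps /\ H (mul (inv g) x).

Definition in01 (x : R) : Prop := 0 <= x < 1.

(* An interval exchange transformation of [0,1), represented as a map R -> R
   that is the identity outside [0,1) (so that IET elements are determined
   by their values on [0,1) and composition is function composition). *)
Definition is_IET (f : R -> R) : Prop :=
  (forall x, ~ in01 x -> f x = x) /\
  (forall x, in01 x -> in01 (f x)) /\
  (forall y, in01 y -> exists x, in01 x /\ f x = y) /\
  (forall x1 x2, in01 x1 -> in01 x2 -> f x1 = f x2 -> x1 = x2) /\
  (exists (n : nat) (a : nat -> R),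
      a 0%nat = 0 /\ a n = 1 /\
      (forall i, (i < n)%nat -> a i < a (S i)) /\
      (forall i, (i < n)%nat -> exists t : R,
         forall x, a i <= x < a (S i) -> f x = x + t)).

Definition embeds_in_IET_on {G : Type} (mul : G -> G -> G) (H : G -> Prop)
  (phi : G -> (R -> R)) : Prop :=
  (forall g, H g -> is_IET (phi g)) /\
  (forall g h, H g -> H h -> phi (mul g h) = (fun x => phi g (phi h x))) /\
  (forall g h, H g -> H h -> phi g = phi h -> g = h).

(* Main.v *)
Require Import Defs.
From Stdlib Require Import Reals List Lra Lia ClassicalEpsilon Classical FunctionalExtensionality.
Open Scope R_scope.

Lemma idx_uniq (a b : nat) (u v : R) : 0 <= u < 1 -> 0 <= v < 1 ->
  INR a + u = INR b + v -> a = b.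
Proof.
  intros Hu Hv E.
  destruct (Nat.lt_trichotomy a b) as [H|[H|H]]; auto; exfalso.
  - apply le_INR in H. rewrite S_INR in H. lra.
  - apply le_INR in H. rewrite S_INR in H. lra.
Qed.

Lemma floor_ex (n : nat) (y : R) : 0 <= y < INR n ->
  exists i, (i < n)%nat /\ INR i <= y < INR i + 1.
Proof.
  induction n as [|n IH]; intros Hy.
  - simpl in Hy; lra.
  - rewrite S_INR in Hy. destruct (Rlt_le_dec y (INR n)) as [H|H].
    + destruct IH as [i [Hi Hi2]]; [lra|]. exists i; split; [lia|lra].
    + exists n; split; [lia|lra].
Qed.

Definition idx (n : nat) (x : R) : nat :=
  epsilon (inhabits 0%nat) (fun i => (i < n)%nat /\ INR i <= x * INR n < INR i + 1).
Definition loc (n : nat) (x : R) : R := x * INR n - INR (idx n x).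

Lemma INRn_pos (n : nat) : (0 < n)%nat -> 0 < INR n.
Proof. intros. apply lt_0_INR; lia. Qed.

Lemma idx_spec (n : nat) (x : R) : (0 < n)%nat -> in01 x ->
  (idx n x < n)%nat /\ INR (idx n x) <= x * INR n < INR (idx n x) + 1.
Proof.
  intros Hn Hx. unfold idx. apply epsilon_spec.
  apply floor_ex. pose proof (INRn_pos n Hn). unfold in01 in Hx. split; nra.
Qed.

Lemma encode (n : nat) (x : R) : (0 < n)%nat -> in01 x ->
  exists i u, (i < n)%nat /\ 0 <= u < 1 /\ x = (INR i + u) / INR n.
Proof.
  intros Hn Hx. destruct (idx_spec n x Hn Hx) as [H1 H2].
  exists (idx n x), (x * INR n - INR (idx n x)). split; [auto|split;[lra|]].
  pose proof (INRn_pos n Hn). field. lra.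
Qed.

Lemma in01_enc (n i : nat) (u : R) : (i < n)%nat -> 0 <= u < 1 ->
  in01 ((INR i + u) / INR n).
Proof.
  intros Hi Hu. assert (Hn : (0 < n)%nat) by lia. pose proof (INRn_pos n Hn).
  assert (INR (S i) <= INR n) by (apply le_INR; lia). rewrite S_INR in H0.
  pose proof (pos_INR i).
  unfold in01; split.
  - apply Rmult_le_pos; [lra|]. left; apply Rinv_0_lt_compat; lra.
  - apply (Rmult_lt_reg_r (INR n)); [lra|]. unfold Rdiv. rewrite Rmult_assoc, Rinv_l; lra.
Qed.

Lemma decode (n i : nat) (u : R) : (i < n)%nat -> 0 <= u < 1 ->
  idx n ((INR i + u) / INR n) = i /\ loc n ((INR i + u) / INR n) = u.
Proof.
  intros Hi Hu. assert (Hn : (0 < n)%nat) by lia. pose proof (INRn_pos n Hn).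
  destruct (idx_spec n _ Hn (in01_enc n i u Hi Hu)) as [H1 H2].
  replace ((INR i + u) / INR n * INR n) with (INR i + u) in H2 by (field; lra).
  assert (E : idx n ((INR i + u) / INR n) = i).
  { symmetry. apply (idx_uniq i _ u ((INR i + u) - INR (idx n ((INR i + u) / INR n)))); auto; try lra. }
  split; auto. unfold loc. rewrite E. field_simplify; [|lra]. reflexivity.
Qed.

Definition phi_gen (n : nat) (F : nat -> R -> R) (x : R) : R :=
  if excluded_middle_informative (in01 x) then F (idx n x) (loc n x) else x.

Lemma phi_gen_dec n F i u : (i < n)%nat -> 0 <= u < 1 ->
  phi_gen n F ((INR i + u) / INR n) = F i u.
Proof.
  intros Hi Hu. unfold phi_gen. destruct (excluded_middle_informative _) as [H|H].
  - destruct (decode n i u Hi Hu) as [-> ->]; auto.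
  - exfalso; apply H, in01_enc; auto.
Qed.

Lemma phi_gen_out n F x : ~ in01 x -> phi_gen n F x = x.
Proof.
  intros H. unfold phi_gen. destruct (excluded_middle_informative _); tauto.
Qed.

Definition PT (f : R -> R) (lo hi : R) : Prop :=
  exists (m : nat) (a : nat -> R),
      a 0%nat = lo /\ a m = hi /\
      (forall i, (i < m)%nat -> a i < a (S i)) /\
      (forall i, (i < m)%nat -> exists t : R,
         forall x, a i <= x < a (S i) -> f x = x + t).

Lemma PT_nil f lo : PT f lo lo.
Proof.
  exists 0%nat, (fun _ => lo). repeat split; intros; lia.
Qed.

Lemma PT_concat f lo mid hi : PT f lo mid -> PT f mid hi -> PT f lo hi.
Proof.
  intros [m1 [a [A0 [Am [Ainc Apc]]]]] [m2 [b [B0 [Bm [Binc Bpc]]]]].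
  exists (m1 + m2)%nat, (fun k => if Nat.leb k m1 then a k else b (k - m1)%nat).
  split; [simpl; auto|].
  split.
  { destruct (Nat.leb (m1+m2) m1) eqn:E.
    - apply Nat.leb_le in E. assert (m2 = 0%nat) by lia. subst.
      rewrite Nat.add_0_r. congruence.
    - replace (m1 + m2 - m1)%nat with m2 by lia. auto. }
  split.
  - intros k Hk. destruct (Nat.le_gt_cases (S k) m1) as [L|L].
    + rewrite (proj2 (Nat.leb_le _ _) L), (proj2 (Nat.leb_le k m1) ltac:(lia)).
      apply Ainc; lia.
    + rewrite (proj2 (Nat.leb_gt _ _) L).
      destruct (Nat.eq_dec k m1) as [->|Ne].
      * rewrite Nat.leb_refl, Nat.sub_succ_l, Nat.sub_diag by lia.
        rewrite Am, <- B0. apply Binc; lia.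
      * rewrite (proj2 (Nat.leb_gt k m1) ltac:(lia)), Nat.sub_succ_l by lia. apply Binc; lia.
  - intros k Hk. destruct (Nat.le_gt_cases (S k) m1) as [L|L].
    + rewrite (proj2 (Nat.leb_le _ _) L), (proj2 (Nat.leb_le k m1) ltac:(lia)).
      apply Apc; lia.
    + rewrite (proj2 (Nat.leb_gt _ _) L).
      destruct (Nat.eq_dec k m1) as [->|Ne].
      * rewrite Nat.leb_refl, Nat.sub_succ_l, Nat.sub_diag by lia.
        rewrite Am, <- B0. apply Bpc; lia.
      * rewrite (proj2 (Nat.leb_gt k m1) ltac:(lia)), Nat.sub_succ_l by lia. apply Bpc; lia.
Qed.

Lemma inc_bounds (m : nat) (a : nat -> R) : a 0%nat = 0 -> a m = 1 ->
  (forall i, (i < m)%nat -> a i < a (S i)) -> forall k, (k <= m)%nat -> 0 <= a k <= 1.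
Proof.
  intros A0 Am Ainc.
  assert (L : forall k, (k <= m)%nat -> 0 <= a k).
  { induction k; intros; [lra|]. pose proof (Ainc k ltac:(lia)). specialize (IHk ltac:(lia)). lra. }
  assert (U : forall d k, (k + d = m)%nat -> a k <= 1).
  { induction d; intros k Hk.
    - rewrite Nat.add_0_r in Hk. subst. lra.
    - pose proof (Ainc k ltac:(lia)). specialize (IHd (S k) ltac:(lia)). lra. }
  intros k Hk. split; [auto|]. apply (U (m - k)%nat). lia.
Qed.

Lemma PT_piece (f g : R -> R) (n i : nat) (c : R) : (0 < n)%nat ->
  is_IET g -> (forall u, 0 <= u < 1 -> f ((INR i + u) / INR n) = (c + g u) / INR n) ->
  PT f (INR i / INR n) (INR (S i) / INR n).
Proof.
  intros Hn [_ [_ [_ [_ [m [a [A0 [Am [Ainc Apc]]]]]]]]] Hf.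
  pose proof (INRn_pos n Hn) as HN.
  exists m, (fun k => (INR i + a k) / INR n). split; [rewrite A0, Rplus_0_r; auto|].
  split; [rewrite Am, S_INR; auto|]. split.
  - intros k Hk. specialize (Ainc k Hk). unfold Rdiv.
    apply Rmult_lt_compat_r; [apply Rinv_0_lt_compat; lra| lra].
  - intros k Hk. destruct (Apc k Hk) as [t Ht].
    exists ((c + t - INR i) / INR n). intros x Hx.
    set (u := x * INR n - INR i).
    assert (Hu : a k <= u < a (S k)).
    { unfold u. destruct Hx as [Hx1 Hx2]. split.
      - apply (Rmult_le_compat_r (INR n)) in Hx1; [|lra].
        replace ((INR i + a k) / INR n * INR n) with (INR i + a k) in Hx1 by (field; lra). lra.
      - apply (Rmult_lt_compat_r (INR n)) in Hx2; [|lra].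
        replace ((INR i + a (S k)) / INR n * INR n) with (INR i + a (S k)) in Hx2 by (field; lra). lra. }
    pose proof (inc_bounds m a A0 Am Ainc k ltac:(lia)).
    pose proof (inc_bounds m a A0 Am Ainc (S k) ltac:(lia)).
    replace x with ((INR i + u) / INR n) by (unfold u; field; lra).
    rewrite Hf by lra. rewrite (Ht u Hu). field. lra.
Qed.

Lemma PT_all (f : R -> R) (n : nat) (cs : nat -> R) (gs : nat -> R -> R) : (0 < n)%nat ->
  (forall i, (i < n)%nat -> is_IET (gs i)) ->
  (forall i u, (i < n)%nat -> 0 <= u < 1 -> f ((INR i + u) / INR n) = (cs i + gs i u) / INR n) ->
  PT f 0 1.
Proof.
  intros Hn Hg Hf.
  assert (K : forall k, (k <= n)%nat -> PT f 0 (INR k / INR n)).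
  { induction k; intros Hk.
    - simpl. unfold Rdiv. rewrite Rmult_0_l. apply PT_nil.
    - apply PT_concat with (INR k / INR n). apply IHk; lia.
      apply (PT_piece f (gs k) n k (cs k)); auto. }
  pose proof (K n (le_n n)). unfold Rdiv in H. rewrite Rinv_r in H; auto.
  pose proof (INRn_pos n Hn). lra.
Qed.

Lemma IET_gen (n : nat) (s : nat -> nat) (p : nat -> R -> R) : (0 < n)%nat ->
  (forall i, (i < n)%nat -> (s i < n)%nat) ->
  (forall j, (j < n)%nat -> exists i, (i < n)%nat /\ s i = j) ->
  (forall i1 i2, (i1 < n)%nat -> (i2 < n)%nat -> s i1 = s i2 -> i1 = i2) ->
  (forall i, (i < n)%nat -> is_IET (p i)) ->
  is_IET (phi_gen n (fun i u => (INR (s i) + p i u) / INR n)).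
Proof.
  intros Hn Hs Hsurj Hinj Hp. pose proof (INRn_pos n Hn) as HN.
  split; [|split; [|split; [|split]]].
  - apply phi_gen_out.
  - intros x Hx. destruct (encode n x Hn Hx) as [i [u [Hi [Hu ->]]]].
    rewrite phi_gen_dec by auto. apply in01_enc; auto.
    destruct (Hp i Hi) as [_ [P _]]. apply P; auto.
  - intros y Hy. destruct (encode n y Hn Hy) as [j [v [Hj [Hv ->]]]].
    destruct (Hsurj j Hj) as [i [Hi <-]].
    destruct (Hp i Hi) as [_ [_ [P _]]]. destruct (P v Hv) as [u [Hu Hu2]].
    exists ((INR i + u) / INR n). split; [apply in01_enc; auto|].
    rewrite phi_gen_dec by auto. rewrite Hu2. auto.
  - intros x1 x2 Hx1 Hx2.
    destruct (encode n x1 Hn Hx1) as [i1 [u1 [Hi1 [Hu1 ->]]]].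
    destruct (encode n x2 Hn Hx2) as [i2 [u2 [Hi2 [Hu2 ->]]]].
    rewrite !phi_gen_dec by auto. intros E.
    destruct (Hp i1 Hi1) as [_ [P1 _]]. destruct (Hp i2 Hi2) as [_ [P2 _]].
    specialize (P1 u1 Hu1). specialize (P2 u2 Hu2).
    assert (E' : INR (s i1) + p i1 u1 = INR (s i2) + p i2 u2).
    { apply (Rmult_eq_reg_r (/ INR n)); [exact E|]. apply Rinv_neq_0_compat; lra. }
    pose proof (idx_uniq _ _ _ _ P1 P2 E') as Es.
    apply Hinj in Es; auto. subst i2.
    assert (p i1 u1 = p i1 u2) by lra.
    destruct (Hp i1 Hi1) as [_ [_ [_ [I _]]]]. rewrite (I u1 u2); auto.
  - apply (PT_all _ n (fun i => INR (s i)) p); auto.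
    intros. apply phi_gen_dec; auto.
Qed.

Lemma inv_uniq {G} (mul : G -> G -> G) one inv : is_group mul one inv ->
  forall a b, mul a b = one -> b = inv a.
Proof.
  intros [As [L1 [R1 [LI RI]]]] a b E.
  rewrite <- (L1 b), <- (LI a), <- As, E, R1. auto.
Qed.

Lemma inv_mul {G} (mul : G -> G -> G) one inv : is_group mul one inv ->
  forall a b, inv (mul a b) = mul (inv b) (inv a).
Proof.
  intros HG a b. pose proof HG as [As [L1 [R1 [LI RI]]]].
  symmetry. apply (inv_uniq mul one inv HG).
  rewrite <- As, (As b), RI, L1, RI. auto.
Qed.

Lemma inv_inv {G} (mul : G -> G -> G) one inv : is_group mul one inv ->
  forall a, inv (inv a) = a.
Proof.
  intros HG a. pose proof HG as [As [L1 [R1 [LI RI]]]].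
  symmetry. apply (inv_uniq mul one inv HG). auto.
Qed.

Lemma cancel_l {G} (mul : G -> G -> G) one inv : is_group mul one inv ->
  forall a b c, mul a b = mul a c -> b = c.
Proof.
  intros [As [L1 [R1 [LI RI]]]] a b c E.
  rewrite <- (L1 b), <- (L1 c), <- (LI a), <- !As, E. auto.
Qed.

Lemma cancel_r {G} (mul : G -> G -> G) one inv : is_group mul one inv ->
  forall a b c, mul b a = mul c a -> b = c.
Proof.
  intros [As [L1 [R1 [LI RI]]]] a b c E.
  rewrite <- (R1 b), <- (R1 c), <- (RI a), !As, E. auto.
Qed.

Lemma coset_trans {G} (mul : G -> G -> G) one inv H : is_group mul one inv ->
  is_subgroup mul one inv H ->
  forall a b x, H (mul (inv a) x) -> H (mul (inv b) x) -> H (mul (inv a) b).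
Proof.
  intros HG [H1 [HM HI]] a b x A B. pose proof HG as [As [L1 [R1 [LI RI]]]].
  specialize (HM _ _ A (HI _ B)).
  rewrite (inv_mul mul one inv HG), (inv_inv mul one inv HG) in HM.
  rewrite <- As, (As x), RI, L1 in HM. auto.
Qed.

Lemma coset_sym {G} (mul : G -> G -> G) one inv H : is_group mul one inv ->
  is_subgroup mul one inv H ->
  forall a b, H (mul (inv a) b) -> H (mul (inv b) a).
Proof.
  intros HG [H1 [HM HI]] a b A. apply HI in A.
  rewrite (inv_mul mul one inv HG), (inv_inv mul one inv HG) in A. auto.
Qed.

Lemma dedupe {G} (mul : G -> G -> G) one inv H : is_group mul one inv ->
  is_subgroup mul one inv H ->
  forall l : list G, exists (n : nat) (r : nat -> G),
    (forall y, In y l -> exists j, (j < n)%nat /\ H (mul (inv (r j)) y)) /\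
    (forall i j, (i < n)%nat -> (j < n)%nat -> H (mul (inv (r i)) (r j)) -> i = j).
Proof.
  intros HG HH. induction l as [|a l IH].
  - exists 0%nat, (fun _ => one). split; [intros y []|intros; lia].
  - destruct IH as [n [r [Cov Dis]]].
    destruct (classic (exists j, (j < n)%nat /\ H (mul (inv (r j)) a))) as [Ex|NEx].
    + exists n, r. split; auto. intros y [<-|Hy]; auto.
    + exists (S n), (fun k => if Nat.eqb k n then a else r k). split.
      * intros y [<-|Hy].
        -- exists n. rewrite Nat.eqb_refl. split; [lia|].
           pose proof HG as [_ [_ [_ [LI _]]]]. rewrite LI. apply HH.
        -- destruct (Cov y Hy) as [j [Hj Hj2]]. exists j.
           rewrite (proj2 (Nat.eqb_neq j n) ltac:(lia)). split; auto.
      * intros i j Hi Hj E.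
        destruct (Nat.eqb_spec i n) as [->|Ni]; destruct (Nat.eqb_spec j n) as [->|Nj]; auto.
        -- exfalso. apply NEx. exists j. split; [lia|].
           apply (coset_sym mul one inv H HG HH). auto.
        -- exfalso. apply NEx. exists i. split; [lia|]. auto.
        -- apply Dis; auto; lia.
Qed.

Lemma grp_calc {G} (mul : G -> G -> G) one inv : is_group mul one inv ->
  forall c g d e, mul (mul (inv c) (mul g d)) (mul (inv d) e) = mul (inv c) (mul g e).
Proof.
  intros [As [L1 [R1 [LI RI]]]] c g d e.
  rewrite <- (As (inv c)), <- (As g), (As d), RI, L1. auto.
Qed.

Theorem mainTheorem8 (G : Type) (mul : G -> G -> G) (one : G) (inv : G -> G)
  (HG : is_group mul one inv) (H : G -> Prop)
  (HH : is_subgroup mul one inv H) (Hfin : finite_index mul inv H)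
  (Hemb : exists psi : G -> (R -> R), embeds_in_IET_on mul H psi) :
  exists phi : G -> (R -> R), embeds_in_IET_on mul (fun _ => True) phi.
Proof.
  destruct Hemb as [psi [PI [Phom Pinj]]].
  destruct Hfin as [reps Hreps].
  destruct (dedupe mul one inv H HG HH reps) as [n [r [Cov Dis]]].
  pose proof HG as [As [L1 [R1 [LI RI]]]].
  pose proof HH as [H1 [HM HI]].
  assert (Cover : forall x, exists j, (j < n)%nat /\ H (mul (inv (r j)) x)).
  { intros x. destruct (Hreps x) as [g [Hg Hgx]]. destruct (Cov g Hg) as [j [Hj Hjg]].
    exists j. split; auto. specialize (HM _ _ Hjg Hgx).
    rewrite <- As, (As g), RI, L1 in HM. auto. }
  assert (Hn : (0 < n)%nat) by (destruct (Cover one) as [j [Hj _]]; lia).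
  pose (sig := fun g i => epsilon (inhabits 0%nat)
                  (fun j => (j < n)%nat /\ H (mul (inv (r j)) (mul g (r i))))).
  assert (Sspec : forall g i, (sig g i < n)%nat /\ H (mul (inv (r (sig g i))) (mul g (r i)))).
  { intros g i. unfold sig. apply epsilon_spec. apply Cover. }
  clearbody sig.
  assert (Suniq : forall g i j, (j < n)%nat -> H (mul (inv (r j)) (mul g (r i))) -> sig g i = j).
  { intros g i j Hj Hh. destruct (Sspec g i) as [S1 S2]. apply Dis; auto.
    apply (coset_trans mul one inv H HG HH _ _ _ S2 Hh). }
  pose (hh := fun g i => mul (inv (r (sig g i))) (mul g (r i))).
  assert (Hhh : forall g i, H (hh g i)) by (intros; apply Sspec).
  assert (Scomp : forall g k i, sig (mul g k) i = sig g (sig k i) /\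
            hh (mul g k) i = mul (hh g (sig k i)) (hh k i)).
  { intros g k i.
    assert (E : mul (hh g (sig k i)) (hh k i) = mul (inv (r (sig g (sig k i)))) (mul (mul g k) (r i))).
    { unfold hh. rewrite (grp_calc mul one inv HG), <- As. auto. }
    assert (S : sig (mul g k) i = sig g (sig k i)).
    { apply Suniq; [apply Sspec|]. rewrite <- E. apply HM; auto. }
    split; auto. unfold hh at 1. rewrite S, E. auto. }
  exists (fun g => phi_gen n (fun i u => (INR (sig g i) + psi (hh g i) u) / INR n)).
  split; [|split].
  - intros g _. apply IET_gen; auto.
    + intros i _. apply Sspec.
    + intros j Hj. exists (sig (inv g) j). split; [apply Sspec|].
      apply Suniq; auto. destruct (Sspec (inv g) j) as [_ Hs].
      apply (coset_sym mul one inv H HG HH) in Hs.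
      rewrite (inv_mul mul one inv HG), (inv_inv mul one inv HG), <- As in Hs. auto.
    + intros i1 i2 Hi1 Hi2 E. apply Dis; auto.
      destruct (Sspec g i1) as [_ A]. destruct (Sspec g i2) as [_ B].
      rewrite E in A.
      pose proof (coset_trans mul one inv H HG HH _ _ _ (coset_sym mul one inv H HG HH _ _ A)
                    (coset_sym mul one inv H HG HH _ _ B)) as C.
      rewrite (inv_mul mul one inv HG) in C.
      rewrite <- As, (As (inv g)), LI, L1 in C. auto.
  - intros g k _ _. apply functional_extensionality. intros x.
    destruct (classic (in01 x)) as [Hx|Hx].
    + destruct (encode n x Hn Hx) as [i [u [Hi [Hu ->]]]].
      rewrite !phi_gen_dec by auto.
      destruct (PI _ (Hhh k i)) as [_ [P _]].
      rewrite phi_gen_dec; [| apply Sspec | apply P; exact Hu].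
      destruct (Scomp g k i) as [-> ->]. rewrite Phom by auto. reflexivity.
    + rewrite !(phi_gen_out n _ x Hx). reflexivity.
  - intros g k _ _ E.
    pose proof (fun u => equal_f E ((INR 0 + u) / INR n)) as E'.
    assert (Ev : forall u, 0 <= u < 1 ->
       INR (sig g 0%nat) + psi (hh g 0%nat) u = INR (sig k 0%nat) + psi (hh k 0%nat) u).
    { intros u Hu. specialize (E' u). cbv beta in E'. rewrite !phi_gen_dec in E' by (auto; lia).
      pose proof (INRn_pos n Hn).
      apply (Rmult_eq_reg_r (/ INR n)); [exact E'|]. apply Rinv_neq_0_compat; lra. }
    assert (Es : sig g 0%nat = sig k 0%nat).
    { destruct (PI _ (Hhh g 0%nat)) as [_ [P1 _]]. destruct (PI _ (Hhh k 0%nat)) as [_ [P2 _]].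
      assert (Z : 0 <= 0 < 1) by lra.
      apply (idx_uniq _ _ _ _ (P1 0 Z) (P2 0 Z) (Ev 0 Z)). }
    assert (Eh : hh g 0%nat = hh k 0%nat).
    { apply Pinj; auto. apply functional_extensionality. intros u.
      destruct (classic (in01 u)) as [Hu|Hu].
      - specialize (Ev u Hu). rewrite Es in Ev. lra.
      - destruct (PI _ (Hhh g 0%nat)) as [P1 _]. destruct (PI _ (Hhh k 0%nat)) as [P2 _].
        rewrite P1, P2; auto. }
    unfold hh in Eh. rewrite Es in Eh.
    apply (cancel_l mul one inv HG) in Eh. apply (cancel_r mul one inv HG) in Eh. auto.
Qed.
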